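(* Fix numbers $\alpha,\beta,\hat\alpha,\hat\beta>0$, and suppose it is not the case that both $\hat\beta\ge\beta$ and $\frac{\alpha}{\beta}\ge\frac{\hat\alpha}{\hat\beta}$. Then there exist a state-independent utility function $u\colon\mathbb{R}\to\mathbb{R}$ that is strictly increasing and weakly concave, a belief $\mu\in[0,1]$, and a nondegenerate interval $[\underline w,\overline w]\subset\mathbb{R}$ such that for every $w\in[\underline w,\overline w]$, $$\mu u(w+\hat\alpha)+(1-\mu)u(w-\hat\beta)\ >\ u(w)\ \ge\ \mu u(w+\alpha)+(1-\mu)u(w-\beta),$$ i.e. $\hat r\succ s\succeq r$ at every wealth in $[\underline w,\overline w]$.
   Context: Setting: two states $\{0,1\}$, belief $\mu=\mathbb{P}(\text{state }1)$. At wealth $w$, the safe action $s$ pays $0$ in both states; the risky action $r$ pays $\alpha$ in state $1$ and $-\beta$ in state $0$; the risky action $\hat r$ pays $\hat\alpha$ in state $1$ and $-\hat\beta$ in state $0$. A subjective expected utility maximizer with utility $u$ of terminal wealth ranks actions by expected utility of $w$ plus the payoff; $\succ$ denotes strict and $\succeq$ weak preference. *)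

(* Defs.v *)
From Stdlib Require Import Reals.
Open Scope R_scope.

Definition strictly_increasing (u : R -> R) : Prop :=
  forall x y, x < y -> u x < u y.

Definition weakly_concave (u : R -> R) : Prop :=
  forall x y t, 0 <= t <= 1 ->
    t * u x + (1 - t) * u y <= u (t * x + (1 - t) * y).

Definition EU (u : R -> R) (mu w a b : R) : R :=
  mu * u (w + a) + (1 - mu) * u (w - b).

(* Main.v *)
Require Import Defs.
From Stdlib Require Import Reals Lra Psatz.
Open Scope R_scope.

Lemma pl_inc (M L : R) : 0 <= M -> strictly_increasing (fun x => x + M * Rmin 0 (x + L)).
Proof.
  intros HM x y Hxy.
  unfold Rmin; destruct (Rle_dec 0 (x+L)); destruct (Rle_dec 0 (y+L)); nra.
Qed.

Lemma pl_conc (M L : R) : 0 <= M -> weakly_concave (fun x => x + M * Rmin 0 (x + L)).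
Proof.
  intros HM x y t Ht.
  assert (H : t * Rmin 0 (x+L) + (1-t) * Rmin 0 (y+L) <= Rmin 0 (t*x + (1-t)*y + L)).
  { unfold Rmin; destruct (Rle_dec 0 (x+L)); destruct (Rle_dec 0 (y+L));
    destruct (Rle_dec 0 (t*x + (1-t)*y + L)); nra. }
  apply (Rmult_le_compat_l M) in H; [|exact HM]. nra.
Qed.

Theorem mainTheorem2 (alpha beta alphah betah : R) :
  0 < alpha -> 0 < beta -> 0 < alphah -> 0 < betah ->
  ~ (betah >= beta /\ alpha / beta >= alphah / betah) ->
  exists (u : R -> R) (mu wl wu : R),
    strictly_increasing u /\ weakly_concave u /\
    0 <= mu <= 1 /\ wl < wu /\
    forall w, wl <= w <= wu ->
      EU u mu w alphah betah > u w /\ u w >= EU u mu w alpha beta.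
Proof.
  intros Ha Hb Hah Hbh Hn.
  destruct (Rlt_dec betah beta) as [Hlt|Hge].
  - set (p := betah / (alphah + betah)).
    assert (Hp0 : 0 < p) by (unfold p; apply Rdiv_lt_0_compat; lra).
    assert (Hpe : p * (alphah + betah) = betah) by (unfold p; field; lra).
    assert (Hp1 : p < 1) by (apply (Rmult_lt_reg_r (alphah + betah)); [lra|]; rewrite Hpe; lra).
    set (mu := (1 + p) / 2).
    set (d := (beta - betah) / 4).
    set (L := (beta + betah) / 2).
    set (M := mu * alpha / ((1 - mu) * d)).
    assert (Hd : 0 < d) by (unfold d; lra).
    assert (Hmu0 : 0 < 1 - mu) by (unfold mu; lra).
    assert (HM : M * ((1 - mu) * d) = mu * alpha) by (unfold M; field; nra).
    assert (HM0 : 0 <= M).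
    { unfold M. apply Rlt_le, Rdiv_lt_0_compat; unfold mu; nra. }
    exists (fun x => x + M * Rmin 0 (x + L)), mu, (-d), d.
    split; [apply pl_inc; exact HM0|].
    split; [apply pl_conc; exact HM0|].
    split; [unfold mu; lra|].
    split; [lra|].
    intros w Hw. unfold EU.
    assert (E1 : Rmin 0 (w + alphah + L) = 0) by (apply Rmin_left; unfold L, d in *; lra).
    assert (E2 : Rmin 0 (w - betah + L) = 0) by (apply Rmin_left; unfold L, d in *; lra).
    assert (E3 : Rmin 0 (w + L) = 0) by (apply Rmin_left; unfold L, d in *; lra).
    assert (E4 : Rmin 0 (w + alpha + L) = 0) by (apply Rmin_left; unfold L, d in *; lra).
    assert (E5 : Rmin 0 (w - beta + L) = w - beta + L) by (apply Rmin_right; unfold L, d in *; lra).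
    cbv beta. rewrite E1, E2, E3, E4, E5.
    assert (Hq : w - beta + L <= - d) by (unfold L, d in *; lra).
    split.
    + unfold mu in *. nra.
    + assert (M * (1 - mu) * (w - beta + L) <= - (M * (1-mu) * d)).
      { assert (0 <= M * (1 - mu)) by nra. nra. }
      nra.
  - assert (Hbb : betah >= beta) by lra.
    assert (Hr : alpha / beta < alphah / betah) by (destruct (Rlt_dec (alpha/beta) (alphah/betah)); [assumption|exfalso; apply Hn; lra]).
    assert (Hr2 : alpha * betah < alphah * beta).
    { apply (Rmult_lt_compat_r (beta * betah)) in Hr; [|nra].
      replace (alpha / beta * (beta * betah)) with (alpha * betah) in Hr by (field; lra).
      replace (alphah / betah * (beta * betah)) with (alphah * beta) in Hr by (field; lra).
      exact Hr. }
    set (mu := beta / (alpha + beta)).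
    assert (Hmu : mu * (alpha + beta) = beta) by (unfold mu; field; lra).
    assert (Hm0 : 0 < mu) by (unfold mu; apply Rdiv_lt_0_compat; lra).
    assert (Hm1 : mu < 1) by (apply (Rmult_lt_reg_r (alpha + beta)); [lra|]; rewrite Hmu; lra).
    exists (fun x => x), mu, 0, 1.
    split; [intros x y H; exact H|].
    split; [intros x y t H; lra|].
    split; [lra|]. split; [lra|].
    intros w _. unfold EU. split.
    + assert (mu * alphah - (1 - mu) * betah > 0).
      { apply (Rmult_lt_reg_r (alpha + beta)); [lra|]. nra. }
      nra.
    + nra.
Qed.
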